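(* Let $n\ge3$ and let $M\subseteq[n]$ be nonempty with $l(M)=l$. Then $h(M)\le 1+2l\log n$, where $\log$ is the binary logarithm.
   Context: $[n]:=\{0,1,\ldots,n\}$, $\mathbb{N}=\{0,1,2,\ldots\}$. For a set $M$ of integers, $l(M)$ is the maximum number of consecutive integers contained in $M$. For a finite $L\subseteq\mathbb{N}$ and an integer $r$, write $L+r:=\{x+r: x\in L,\ x+r\ge 0\}$. Define $h$ on finite subsets of $\mathbb{N}$ recursively on $|L|$: $h(\emptyset)=0$, and for $L\neq\emptyset$, $$h(L)=1+\max\Big\{h(L\cap(L+1)),\ \max_{M'\in T(L)}\min\{h(L\cap M'),\,h(L\cap(M'-1))\}\Big\},$$ where $T(L)$ is the set of all finite $M'\subseteq\mathbb{N}$ with $M'\notin\{L,L+1\}$ and $0<|M'|\le|L|$. *)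

(* Defs.v *)
From Stdlib Require Import ClassicalEpsilon.
From mathcomp Require Import all_boot.
Set Implicit Arguments. Unset Strict Implicit. Unset Printing Implicit Defensive.

(* Finite subsets of N are represented by sequences of naturals, read as sets
   (membership; duplicates irrelevant). |L| = size (undup L). *)

Definition pb (P : Prop) : bool :=
  if excluded_middle_informative P then true else false.

Definition card_set (L : seq nat) : nat := size (undup L).
Definition inter (A B : seq nat) : seq nat := [seq x <- A | x \in B].
Definition shift_up (L : seq nat) : seq nat := [seq x.+1 | x <- L].
Definition shift_down (L : seq nat) : seq nat := [seq x.-1 | x <- L & 0 < x].

Definition inT (L M' : seq nat) : Prop :=
  ~ (M' =i L) /\ ~ (M' =i shift_up L) /\ 0 < card_set M' /\ card_set M' <= card_set L.

(* Fuelled version of the recursion; all values of h_fuel k are <= k, so the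
   inner maximum over the (infinite) family T(L) is taken over values v < k'.+1. *)
Fixpoint h_fuel (k : nat) (L : seq nat) : nat :=
  match k with
  | 0 => 0
  | k'.+1 =>
      if card_set L == 0 then 0 else
      1 + maxn (h_fuel k' (inter L (shift_up L)))
               (\max_(v < k'.+1 | pb (exists M', inT L M' /\
                     nat_of_ord v = minn (h_fuel k' (inter L M'))
                              (h_fuel k' (inter L (shift_down M'))))) v)
  end.

(* The recursion descends to proper subsets, so fuel |L| suffices. *)
Definition h (L : seq nat) : nat := h_fuel (card_set L) L.

Definition lcons (M : seq nat) : nat :=
  \max_(k < (card_set M).+1 | pb (exists a, all (fun x => x \in M) (iota a k))) k.

(* Main.v *)
Require Import Defs.
From Stdlib Require Import Reals.
From mathcomp Require Import all_boot.
From Stdlib Require Import Lra ClassicalEpsilon.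
From mathcomp Require Import zify.

Section RealFacts.
Local Open Scope R_scope.

Lemma ln_le' x y : 0 < x -> x <= y -> ln x <= ln y.
Proof. intros Hx [H|H]; [left; apply ln_increasing; auto | subst; lra]. Qed.

Lemma ln_le_sub1 y : 0 < y -> ln y <= y - 1.
Proof.
intros Hy. rewrite <- (ln_exp (y - 1)). apply ln_le'; auto.
generalize (exp_ineq1_le (y - 1)); lra.
Qed.

Lemma ln2_le : ln 2 <= 3/4.
Proof.
rewrite <- (ln_exp (3/4)). apply ln_le'; [lra|].
assert (E : exp (3/4) = exp (3/32) * exp (3/32) * exp (3/32) * exp (3/32) *
                        exp (3/32) * exp (3/32) * exp (3/32) * exp (3/32)).
{ rewrite <- !exp_plus. f_equal. lra. }
rewrite E. generalize (exp_ineq1_le (3/32)). intro H.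
set (e := exp (3/32)) in *.
assert (H2 : e * e >= 1225/1024) by nra.
assert (H4 : e * e * e * e >= 1500625/1048576) by nra.
nra.
Qed.

Lemma ln_ge1 x : 3 <= x -> 1 <= ln x.
Proof.
intros H. rewrite <- (ln_exp 1). apply ln_le'. apply exp_pos.
generalize exp_le_3; lra.
Qed.

Lemma final_real n m : 3 <= n -> 1 <= m -> m <= n + 1 -> ln m <= ln n / ln 2.
Proof.
intros Hn Hm Hmn.
assert (L2 := ln_lt_2). assert (L2' := ln2_le).
assert (Hlnn := ln_ge1 n Hn).
assert (A : ln m <= ln (n + 1)) by (apply ln_le'; lra).
assert (B : ln (n + 1) <= ln n + / n).
{ replace (n + 1) with (((n+1)/n) * n) by (field; lra).
  rewrite (ln_mult ((n+1)/n) n); [| apply Rdiv_lt_0_compat; lra | lra].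
  assert (C := ln_le_sub1 ((n+1)/n)).
  assert (D : (n+1)/n - 1 = / n) by (field; lra).
  assert (0 < (n+1)/n) by (apply Rdiv_lt_0_compat; lra). lra. }
assert (In : / n <= 1/3).
{ unfold Rdiv; rewrite Rmult_1_l. apply Rinv_le_contravar; lra. }
assert (I2 : 4/3 <= / ln 2).
{ replace (4/3) with (/ (3/4)) by field. apply Rinv_le_contravar; lra. }
unfold Rdiv. nra.
Qed.

Lemma step2_real (a m l : R) : 0 < a -> 0 < m -> 1 <= l -> 2 * l * a <= (2 * l - 1) * m ->
  1 + 2 * l * ln a <= 2 * l * ln m.
Proof.
intros Ha Hm Hl H.
assert (E : a = (a / m) * m) by (field; lra).
assert (Hy : 0 < a / m) by (apply Rdiv_lt_0_compat; lra).
assert (F : ln a = ln (a/m) + ln m) by (rewrite {1}E; apply ln_mult; auto). rewrite F.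
assert (C := ln_le_sub1 (a/m) Hy).
assert (D : 2 * l * (a / m) <= 2 * l - 1).
{ apply (Rmult_le_reg_r m); [lra|]. replace (2 * l * (a / m) * m) with (2 * l * a) by (field; lra). lra. }
nra.
Qed.

Lemma step1_real (a m l : R) : 1 <= a -> a <= m -> 2 <= m -> 1 <= l ->
  1 + 2 * (l - 1) * ln a <= 2 * l * ln m.
Proof.
intros Ha Ham Hm Hl.
assert (L2 := ln_lt_2).
assert (A : ln a <= ln m) by (apply ln_le'; lra).
assert (B : ln 2 <= ln m) by (apply ln_le'; lra).
assert (C : 0 <= ln a) by (rewrite <- ln_1; apply ln_le'; lra).
nra.
Qed.

End RealFacts.
Set Implicit Arguments. Unset Strict Implicit. Unset Printing Implicit Defensive.


Definition noRun (l : nat) (L : seq nat) := forall a, ~~ all (fun x => x \in L) (iota a l.+1).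

Lemma pbP (P : Prop) : pb P = true <-> P.
Proof. rewrite /pb; case: excluded_middle_informative => //. Qed.

Lemma card_inter L X : card_set (inter L X) = size [seq x <- undup L | x \in X].
Proof. by rewrite /card_set /inter filter_undup. Qed.

Lemma mem_shift_up L x : (x \in shift_up L) = (0 < x) && (x.-1 \in L).
Proof.
case: x => [|x] /=; first by apply/mapP => -[].
by rewrite /shift_up (mem_map succn_inj).
Qed.

Lemma mem_shift_down M x : (x \in shift_down M) = (x.+1 \in M).
Proof.
apply/mapP/idP => [[y]|H].
  by rewrite mem_filter => /andP[y0 yM] ->; case: y y0 yM.
by exists x.+1 => //; rewrite mem_filter.
Qed.

Lemma size_flat_iota (S : seq nat) l : size (flatten [seq iota s l | s <- S]) = l * size S.
Proof. by elim: S => [|s S IH] /=; [rewrite muln0 | rewrite size_cat size_iota IH mulnS]. Qed.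

Lemma run_contra L l j t : noRun l L -> l <= j -> all (fun x => x \in L) (iota t j.+1) -> False.
Proof.
move=> NR lj H; have E : j.+1 = l.+1 + (j - l) by lia.
move: (NR t) => /negP; apply.
by move: H; rewrite E iotaD all_cat => /andP[].
Qed.

Lemma start_exists L l : noRun l L -> forall t j, all (fun x => x \in L) (iota t j.+1) ->
  exists s, [/\ s \in L, s \notin shift_up L, s <= t + j & t + j < s + l].
Proof.
move=> NR; elim=> [|t IH] j H.
  exists 0; split => //.
  - by move: H => /= /andP[].
  - by rewrite mem_shift_up.
  rewrite add0n; case: (ltnP j l) => // lj.
  by case: (run_contra NR lj H).
case E: (t.+1 \in shift_up L).
  move: E; rewrite mem_shift_up /= => tL.
  have [s [? ? ? ?]] := IH j.+1 ltac:(by rewrite /=; apply/andP; split).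
  by exists s; split => //; rewrite addSnnS.
exists t.+1; split => //.
  - by move: H => /= /andP[].
  - by rewrite E.
  - by rewrite leq_addr.
case: (ltnP j l) => lj; first by rewrite ltn_add2l.
by case: (run_contra NR lj H).
Qed.

Definition starts L := [seq x <- undup L | x \notin shift_up L].

Lemma card_le_starts L l : noRun l L -> card_set L <= l * size (starts L).
Proof.
move=> NR; rewrite -size_flat_iota /card_set; apply: uniq_leq_size; first exact: undup_uniq.
move=> x; rewrite mem_undup => xL.
have [s [sL sS sx xs]] := start_exists NR (t:=x) (j:=0) ltac:(by rewrite /= xL).
apply/flatten_mapP; exists s; first by rewrite mem_filter sS mem_undup.
by rewrite addn0 in sx xs; rewrite mem_iota sx xs.
Qed.

Lemma starts_card L : size (starts L) + card_set (inter L (shift_up L)) = card_set L.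
Proof.
rewrite card_inter /starts !size_filter addnC.
by rewrite /card_set; exact: count_predC.
Qed.

Lemma AB_card L M' :
  card_set (inter L M') + card_set (inter L (shift_down M'))
  <= card_set M' + card_set (inter L (shift_up L)).
Proof.
rewrite !card_inter.
set UA := [seq x <- undup L | x \in M'].
set UB := [seq x <- undup L | x \in shift_down M'].
set UB1 := map succn UB.
have uUA : uniq UA by rewrite filter_uniq ?undup_uniq.
have uUB : uniq UB by rewrite filter_uniq ?undup_uniq.
have uUB1 : uniq UB1 by rewrite /UB1 map_inj_uniq //; exact: succn_inj.
have sB : size UB = size UB1 by rewrite size_map.
rewrite sB -(count_predC (fun x => x \notin UB1) UA) -!size_filter.
have H1 : size ([seq x <- UA | x \notin UB1] ++ UB1) <= card_set M'.
  apply: uniq_leq_size.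
    rewrite cat_uniq filter_uniq // uUB1 andbT /=.
    by apply/hasPn => x xB; rewrite mem_filter xB.
  move=> x; rewrite mem_cat mem_undup => /orP[|].
    by rewrite mem_filter mem_filter => /andP[_ /andP[]].
  case/mapP => y; rewrite mem_filter mem_shift_down => /andP[] //.
  by move=> yM _ ->.
have H2 : size [seq x <- UA | predC (fun x => x \notin UB1) x] <=
          size [seq x <- undup L | x \in shift_up L].
  apply: uniq_leq_size; first by rewrite filter_uniq.
  move=> x; rewrite mem_filter /= negbK => /andP[/mapP[y yB ->] yA].
  move: yA; rewrite mem_filter mem_undup => /andP[_ yL].
  move: yB; rewrite mem_filter mem_undup => /andP[_ yL'].
  by rewrite mem_filter mem_undup mem_shift_up /= yL yL'.
rewrite size_cat in H1; rewrite addnAC; exact: leq_add H1 H2.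
Qed.


Lemma nat_step2 L M' l :
  noRun l L -> card_set M' <= card_set L ->
  let a := card_set (inter L M') in let b := card_set (inter L (shift_down M')) in
  forall x, x <= a -> x <= b -> 2 * l * x <= (2 * l - 1) * card_set L.
Proof.
move=> NR HM a b x xa xb.
have H1 := card_le_starts NR. have H2 := starts_card L. have H3 := AB_card L M'.
rewrite -/a -/b in H3.
set s := size (starts L) in H1 H2.
set c := card_set (inter L (shift_up L)) in H2 H3.
set m := card_set L in H1 H2 HM *.
have H4 : 2 * x + s <= 2 * m by lia.
have H5 : l * (2 * x + s) <= l * (2 * m) by rewrite leq_mul2l H4 orbT.
nia.
Qed.

Lemma h_fuel0 k L : card_set L = 0 -> h_fuel k L = 0.
Proof. by case: k => //= k ->. Qed.

Lemma noRun_sub l L L' : {subset L' <= L} -> noRun l L -> noRun l L'.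
Proof.
move=> sub NR a; apply/negP => H; move: (NR a) => /negP; apply.
by apply/allP => x /(allP H) /sub.
Qed.

Lemma inter_sub L X : {subset inter L X <= L}.
Proof. by move=> x; rewrite mem_filter => /andP[]. Qed.

Lemma noRun_up l L : noRun l L -> noRun l.-1 (inter L (shift_up L)).
Proof.
case: l => [|l] NR; first exact: noRun_sub (@inter_sub _ _) NR.
move=> a /=; apply/negP => /= HH; move/andP: HH => [aI H].
move: aI; rewrite mem_filter mem_shift_up => /andP[/andP[a0 a1] aL].
move: (NR a.-1) => /negP; apply; rewrite /= a1 /=.
rewrite prednK //; apply/andP; split => //.
by apply/allP => x /(allP H) /inter_sub.
Qed.

Lemma noRun0 L : noRun 0 L -> card_set L = 0.
Proof.
move=> NR; apply/eqP; rewrite size_eq0; case E: (undup L) => [|x s] //.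
have : x \in L by rewrite -mem_undup E mem_head.
by move=> xL; move: (NR x) => /=; rewrite xL.
Qed.

Lemma INR_maxn_le a b (B : R) : Rle (INR a) B -> Rle (INR b) B -> Rle (INR (maxn a b)) B.
Proof. by move=> Ha Hb; rewrite /maxn; case: ifP. Qed.

Lemma INR_bigmax_le k (P : pred 'I_k) (B : R) : Rle 0 B ->
  (forall i : 'I_k, P i -> Rle (INR i) B) -> Rle (INR (\max_(i | P i) i)) B.
Proof.
move=> B0 H; elim/big_rec: _ => [|i x Pi Hx] //.
exact: INR_maxn_le (H i Pi) Hx.
Qed.

Lemma ln_nonneg_nat m : 0 < m -> Rle 0 (ln (INR m)).
Proof.
move=> m0; rewrite -ln_1; apply: ln_le'; first lra.
by apply: (le_INR 1); apply/leP.
Qed.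

Lemma INR_pos m : 0 < m -> Rlt 0 (INR m).
Proof. by move=> m0; apply: lt_0_INR; apply/ltP. Qed.

Lemma main_bound k : forall L l, noRun l L -> 0 < card_set L ->
  Rle (INR (h_fuel k L)) (Rplus 1 (Rmult (Rmult 2 (INR l)) (ln (INR (card_set L))))).
Proof.
elim: k => [|k IH] L l NR m0.
  rewrite /=. have := ln_nonneg_nat m0. have := pos_INR l. nra.
have l1 : 0 < l by case: l NR => // NR; rewrite noRun0 in m0.
have Hl1 : Rle 1 (INR l) by apply: (le_INR 1); apply/leP.
have Hm := ln_nonneg_nat m0.
have B0 : Rle 0 (Rmult (Rmult 2 (INR l)) (ln (INR (card_set L)))) by nra.
rewrite /= ifN; last by rewrite -lt0n.
rewrite add1n S_INR Rplus_comm; apply: Rplus_le_compat_l.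
apply: INR_maxn_le.
  set L' := inter L (shift_up L).
  case: (posnP (card_set L')) => c0; first by rewrite h_fuel0.
  apply: Rle_trans (IH L' l.-1 (noRun_up NR) c0) _.
  have H2 := starts_card L. have H1 := card_le_starts NR.
  rewrite -/L' in H2.
  have cle : card_set L' <= card_set L by lia.
  have m2 : 2 <= card_set L by nia.
  have := step1_real (INR (card_set L')) (INR (card_set L)) (INR l).
  rewrite (_ : INR l.-1 = Rminus (INR l) 1); last first.
    by rewrite -(prednK l1) S_INR /=; lra.
  move=> H; apply: H => //.
  - by apply: (le_INR 1); apply/leP.
  - by apply: le_INR; apply/leP.
  - by apply: (le_INR 2); apply/leP.
apply: INR_bigmax_le => // v /pbP [M' [[_ [_ [_ HM]]] ->]].
have key := nat_step2 NR HM.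
set a := card_set (inter L M') in key.
set b := card_set (inter L (shift_down M')) in key.
have gen : forall X, {subset X <= L} -> 2 * l * card_set X <= (2 * l - 1) * card_set L ->
    Rle (INR (h_fuel k X)) (Rmult (Rmult 2 (INR l)) (ln (INR (card_set L)))).
  move=> X sub HX.
  case: (posnP (card_set X)) => x0; first by rewrite h_fuel0.
  apply: Rle_trans (IH X l (noRun_sub sub NR) x0) _.
  apply: step2_real => //; try exact: INR_pos.
  have E : forall p q, p <= q -> Rle (INR p) (INR q) by move=> p q pq; apply: le_INR; apply/leP.
  have := E _ _ HX; rewrite !mult_INR minus_INR; last by lia.
  by rewrite mult_INR /=; lra.
case: (leqP a b) => ab.
  apply: Rle_trans (gen _ (@inter_sub _ _) (key a (leqnn a) ab)).
  by apply: le_INR; apply/leP; rewrite geq_minl.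
apply: Rle_trans (gen _ (@inter_sub _ _) (key b (ltnW ab) (leqnn b))).
by apply: le_INR; apply/leP; rewrite geq_minr.
Qed.

Lemma lcons_noRun M : noRun (lcons M) M.
Proof.
move=> a; apply/negP => H.
have sz : (lcons M).+1 < (card_set M).+1.
  rewrite ltnS -(size_iota a (lcons M).+1); apply: uniq_leq_size; first exact: iota_uniq.
  by move=> x /(allP H); rewrite mem_undup.
have HH : pb (exists a0, all (fun x => x \in M) (iota a0 (Ordinal sz))).
  by apply/pbP; exists a.
have := @leq_bigmax_cond _ (fun k : 'I_(card_set M).+1 => pb (exists a, all (fun x => x \in M) (iota a k)))
   (fun k => nat_of_ord k) (Ordinal sz) HH.
by rewrite /= -/(lcons M) ltnn.
Qed.

Lemma card_le_n n M : all (fun x => x <= n) M -> card_set M <= n.+1.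
Proof.
move=> H; rewrite -(size_iota 0 n.+1); apply: uniq_leq_size; first exact: undup_uniq.
by move=> x; rewrite mem_undup mem_iota add0n ltnS => /(allP H).
Qed.

Lemma card_pos M : M != [::] -> 0 < card_set M.
Proof.
case: M => // x M _; rewrite /card_set lt0n size_eq0; apply/eqP => E.
by have := mem_undup (x :: M) x; rewrite E mem_head.
Qed.

Theorem proposition14 (n : nat) (M : seq nat) :
  3 <= n -> M != [::] -> all (fun x => x <= n) M ->
  Rle (INR (h M))
      (Rplus 1 (Rmult (Rmult 2 (INR (lcons M))) (Rdiv (ln (INR n)) (ln 2)))).
Proof.
move=> n3 M0 Mn.
have m0 := card_pos M0.
apply: Rle_trans (main_bound (card_set M) (lcons_noRun M) m0) _.
apply: Rplus_le_compat_l; apply: Rmult_le_compat_l.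
  have := pos_INR (lcons M); lra.
apply: final_real.
- have H3 : Rle (INR 3) (INR n) by apply: le_INR; apply/leP.
  move: H3; rewrite /=; lra.
- have H3 : Rle (INR 1) (INR (card_set M)) by apply: le_INR; apply/leP.
  move: H3; rewrite /=; lra.
- rewrite -S_INR; apply: le_INR; apply/leP; exact: card_le_n.
Qed.
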